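(* Let $N$ be an even positive integer and $\hbar=1/(2\pi N)$. For every operator $A$ that is a finite linear combination of the operators $U^jV^k$ ($j,k\in\mathbb{Z}$), and every $m\in\{0,\dots,N-1\}$, \[ [X,F^\dagger AF]\,\Phi_m^{(0,0)}=[Y,F^\dagger AF]\,\Phi_m^{(0,0)}=0. \]
   Context: On $L^2(\mathbb{R})$ with $[\widehat{x},\widehat{p}]=i\hbar$, $U=e^{2\pi i\widehat{x}}$, $V=e^{2\pi i\widehat{p}}$. $|x\rangle_x$ are position eigen-distributions and $\Phi_m^{(0,0)}=N^{-1/2}\sum_{k\in\mathbb{Z}}|m/N+k\rangle_x$. $X^s=e^{is\widehat{x}/\hbar}$, $Y^s=e^{is\widehat{p}/\hbar}$ for real $s$ (so $X=U^N$, $Y=V^N$). Projections $L,R,E_x,O_x$ are multiplication in position representation by the indicators of $[0,1/2)+\mathbb{Z}$, $[1/2,1)+\mathbb{Z}$, $[0,1)+2\mathbb{Z}$, $[1,2)+2\mathbb{Z}$; $B,T,E_p,O_p$ are the analogous projections in momentum representation onto $[0,1/2)+\mathbb{Z}$, $[1/2,1)+\mathbb{Z}$, $[0,1)+2\mathbb{Z}$, $[1,2)+2\mathbb{Z}$; all act on $\delta$-comb distributions in the natural way. $S=\exp\!\left(-\frac{i\log2}{2\hbar}(\widehat{x}\widehat{p}+\widehat{p}\widehat{x})\right)$. The propagator is $F=S(L+X^{-1}R)(E_p+Y^{-1/2}O_p)$, which the paper also writes as $(E_x+X^{-1/2}O_x)(B+Y^{-1}T)S$. *)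

(* Defs.v *)
From Stdlib Require Import Reals List ClassicalEpsilon.
From Coquelicot Require Import Coquelicot.
Open Scope R_scope.

(** A (generalised) state is represented by its coefficient function
    [f : R -> C], standing for the distribution  sum_a f(a) |a>_x
    (position representation).  All states considered here are
    "dyadic periodic combs" (see [comb_struct]); the operators below are the
    natural actions of the paper's operators on such combs. *)
Definition state := R -> C.
Definition op := state -> state.

Definition hbar (N : nat) : R := / (2 * PI * INR N).

Definition cexp (t : R) : C := (cos t, sin t).

Fixpoint csum (n : nat) (g : nat -> C) : C :=
  match n with O => RtoC 0 | S n' => Cplus (csum n' g) (g n') end.

Definition ind (P : Prop) : C :=
  if excluded_middle_informative P then RtoC 1 else RtoC 0.

Definition op_add (A B : op) : op := fun f x => Cplus (A f x) (B f x).
Definition op_comp (A B : op) : op := fun f => A (B f).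
Definition commutator (A B : op) : op :=
  fun f x => Cminus (A (B f) x) (B (A f) x).

Definition Uop : op := fun f x => Cmult (cexp (2 * PI * x)) (f x).
Definition Xpow (N : nat) (s : R) : op :=
  fun f x => Cmult (cexp (s * x / hbar N)) (f x).
Definition Lop : op := fun f x => Cmult (ind (frac_part x < /2)) (f x).
Definition Rop : op := fun f x => Cmult (ind (/2 <= frac_part x)) (f x).
Definition Exop : op := fun f x => Cmult (ind (frac_part (x / 2) < /2)) (f x).
Definition Oxop : op := fun f x => Cmult (ind (/2 <= frac_part (x / 2))) (f x).

(** ** Translations (functions of p): e^{i s p/hbar} psi(x) = psi(x+s);
    on the coefficient function of a comb this is again f |-> f(. + s). *)
Definition Ypow (s : R) : op := fun f x => f (x + s).
(** V = e^{2 pi i p} = Y^{2 pi hbar} *)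
Definition Vop (N : nat) : op := fun f x => f (x + 2 * PI * hbar N).

(** ** Dilation S = exp(-(i log 2 / (2 hbar)) (xp+px)):
    (S psi)(x) = 2^{-1/2} psi(x/2), hence S |a>_x = sqrt 2 |2a>_x. *)
Definition Sop : op := fun f y => Cmult (RtoC (sqrt 2)) (f (y / 2)).
Definition Sinv : op := fun f y => Cmult (RtoC (/ sqrt 2)) (f (2 * y)).

Definition lat (N j : nat) : R := 2 * PI * hbar N / 2 ^ j.

Definition comb_struct (N j i : nat) (f : state) : Prop :=
  (1 <= j)%nat /\
  (forall x, f x <> RtoC 0 -> exists k : Z, x = IZR k * lat N j) /\
  (forall x, f (x + 2 ^ i) = f x).

(** For such a comb (M = 2^i / h = N 2^(i+j) points per period) the
    momentum representation is a comb at p_n = 2 pi hbar n / 2^i with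
    coefficients given by the DFT; multiplying by chi(p_n) and transforming
    back gives the following formula. *)
Definition mom_formula (N : nat) (chi : R -> Prop) (j i : nat) (f : state) : state :=
  fun x =>
    let h := lat N j in
    let M := (N * 2 ^ (i + j))%nat in
    Cmult (ind (exists k : Z, x = IZR k * h))
      (Cmult (RtoC (/ INR M))
        (csum M (fun n =>
           Cmult (ind (chi (2 * PI * hbar N * INR n / 2 ^ i)))
             (csum M (fun r =>
                Cmult (f (INR r * h))
                  (cexp (2 * PI * INR n * (x / h - INR r) / INR M))))))).

(** Momentum multiplier by the indicator of chi (evaluated with any valid
    comb structure; the result does not depend on the choice). *)
Definition mom_mult (N : nat) (chi : R -> Prop) : op := fun f =>
  match excluded_middle_informative
          (exists ji : nat * nat, comb_struct N (fst ji) (snd ji) f) with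
  | left H =>
      let ji := proj1_sig (constructive_indefinite_description _ H) in
      mom_formula N chi (fst ji) (snd ji) f
  | right _ => fun _ => RtoC 0
  end.

Definition Bop (N : nat) : op := mom_mult N (fun p => frac_part p < /2).
Definition Top (N : nat) : op := mom_mult N (fun p => /2 <= frac_part p).
Definition Epop (N : nat) : op := mom_mult N (fun p => frac_part (p / 2) < /2).
Definition Opop (N : nat) : op := mom_mult N (fun p => /2 <= frac_part (p / 2)).

Definition Fop (N : nat) : op :=
  op_comp Sop
    (op_comp (op_add Lop (op_comp (Xpow N (-1)) Rop))
             (op_add (Epop N) (op_comp (Ypow (-/2)) (Opop N)))).

(** F^dagger = (E_p + Y^{-1/2} O_p)^dagger (L + X^{-1} R)^dagger S^dagger
             = (E_p + O_p Y^{1/2}) (L + R X) S^{-1}                        *)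
Definition Fdag (N : nat) : op :=
  op_comp (op_add (Epop N) (op_comp (Opop N) (Ypow (/2))))
    (op_comp (op_add Lop (op_comp Rop (Xpow N 1))) Sinv).

(** ** Finite linear combinations  A = sum c U^j V^k  (list of (c, j, k)).
    (U^j V^k f)(x) = e^{2 pi i j x} f(x + 2 pi hbar k). *)
Definition UjVk (N : nat) (j k : Z) : op :=
  fun f x => Cmult (cexp (2 * PI * IZR j * x)) (f (x + 2 * PI * hbar N * IZR k)).

Definition Aop (N : nat) (l : list (C * Z * Z)) : op :=
  fun f x => fold_right
    (fun cjk acc => Cplus acc
        (Cmult (fst (fst cjk)) (UjVk N (snd (fst cjk)) (snd cjk) f x)))
    (RtoC 0) l.

Definition Phi (N m : nat) : state := fun x =>
  Cmult (RtoC (/ sqrt (INR N))) (ind (exists k : Z, x = INR m / INR N + IZR k)).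

Definition zero_state : state := fun _ => RtoC 0.

(* Main.v *)
Require Import Defs.
From Stdlib Require Import Reals List Lra Lia ZArith FunctionalExtensionality ClassicalEpsilon Classical.
From Coquelicot Require Import Coquelicot.
Open Scope R_scope.

Lemma cexp_add a b : cexp (a + b) = Cmult (cexp a) (cexp b).
Proof. unfold cexp, Cmult; simpl. rewrite cos_plus, sin_plus. f_equal; ring. Qed.

Lemma cexp_0 : cexp 0 = RtoC 1.
Proof. unfold cexp, RtoC. rewrite cos_0, sin_0. reflexivity. Qed.

Lemma cexp_2PI_nat (n : nat) : cexp (2 * PI * INR n) = RtoC 1.
Proof.
  induction n.
  - simpl. replace (2*PI*0) with 0 by ring. apply cexp_0.
  - rewrite S_INR. replace (2 * PI * (INR n + 1)) with (2*PI*INR n + 2*PI) by ring.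
    rewrite cexp_add, IHn. unfold cexp. rewrite cos_2PI, sin_2PI.
    unfold Cmult, RtoC; simpl. f_equal; ring.
Qed.

Lemma cexp_2PI_Z (k : Z) : cexp (2 * PI * IZR k) = RtoC 1.
Proof.
  destruct (Z_le_gt_dec 0 k).
  - rewrite <- (Z2Nat.id k) by lia. rewrite <- INR_IZR_INZ. apply cexp_2PI_nat.
  - replace k with (- Z.of_nat (Z.to_nat (-k)))%Z by lia.
    rewrite opp_IZR, <- INR_IZR_INZ.
    pose proof (cexp_2PI_nat (Z.to_nat (-k))) as H. unfold cexp in *.
    replace (2 * PI * - INR (Z.to_nat (- k))) with (- (2 * PI * INR (Z.to_nat (- k)))) by ring.
    rewrite cos_neg, sin_neg. injection H as H1 H2. rewrite H1, H2. unfold RtoC. f_equal. ring.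
Qed.

Lemma cexp_PI : cexp PI = RtoC (-1).
Proof. unfold cexp. rewrite cos_PI, sin_PI. reflexivity. Qed.

Lemma ind_true (P : Prop) : P -> Defs.ind P = RtoC 1.
Proof. intros H. unfold Defs.ind. destruct (excluded_middle_informative P); tauto. Qed.
Lemma ind_false (P : Prop) : ~ P -> Defs.ind P = RtoC 0.
Proof. intros H. unfold Defs.ind. destruct (excluded_middle_informative P); tauto. Qed.
Lemma ind_iff (P Q : Prop) : (P <-> Q) -> Defs.ind P = Defs.ind Q.
Proof. intros H. unfold Defs.ind. destruct (excluded_middle_informative P), (excluded_middle_informative Q); tauto. Qed.

Lemma frac_char x (k : Z) : IZR k <= x < IZR k + 1 -> frac_part x = x - IZR k.
Proof.
  intros H. destruct (Int_part_frac_part_spec x k (x - IZR k)) as [_ H2]; [lra|ring|].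
  auto.
Qed.

Lemma frac_addZ x (k : Z) : frac_part (x + IZR k) = frac_part x.
Proof.
  pose proof (base_fp x). pose proof (Rplus_Int_part_frac_part x).
  rewrite (frac_char (x + IZR k) (Int_part x + k)).
  - unfold frac_part. rewrite plus_IZR. ring.
  - rewrite plus_IZR. lra.
Qed.

Lemma frac_half_L x : Defs.ind (frac_part (x + /2) < /2) = Defs.ind (/2 <= frac_part x).
Proof.
  pose proof (base_fp x). pose proof (Rplus_Int_part_frac_part x).
  destruct (Rlt_le_dec (frac_part x) (/2)).
  - rewrite (frac_char (x + /2) (Int_part x)) by lra.
    rewrite ?plus_IZR; rewrite !ind_false; auto; lra.
  - rewrite (frac_char (x + /2) (Int_part x + 1)) by (rewrite plus_IZR; lra).
    rewrite ?plus_IZR; rewrite !ind_true; auto; lra.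
Qed.

Lemma frac_half_R x : Defs.ind (/2 <= frac_part (x + /2)) = Defs.ind (frac_part x < /2).
Proof.
  pose proof (base_fp x). pose proof (Rplus_Int_part_frac_part x).
  destruct (Rlt_le_dec (frac_part x) (/2)).
  - rewrite (frac_char (x + /2) (Int_part x)) by lra.
    rewrite ?plus_IZR; rewrite !ind_true; auto; lra.
  - rewrite (frac_char (x + /2) (Int_part x + 1)) by (rewrite plus_IZR; lra).
    rewrite ?plus_IZR; rewrite !ind_false; auto; lra.
Qed.

Lemma csum_ext n g g' : (forall k, (k < n)%nat -> g k = g' k) -> csum n g = csum n g'.
Proof. induction n; intros H; simpl; auto. rewrite IHn by (intros; apply H; lia). rewrite H by lia. auto. Qed.

Lemma csum_plus n g g' : csum n (fun k => Cplus (g k) (g' k)) = Cplus (csum n g) (csum n g').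
Proof. induction n; simpl. - apply injective_projections; simpl; ring. - rewrite IHn. ring. Qed.

Lemma csum_scal n c g : csum n (fun k => Cmult c (g k)) = Cmult c (csum n g).
Proof. induction n; simpl. - apply injective_projections; simpl; ring. - rewrite IHn. ring. Qed.

Lemma csum_zero n g : (forall k, (k < n)%nat -> g k = RtoC 0) -> csum n g = RtoC 0.
Proof. induction n; intros H; simpl; auto. rewrite IHn, H by (intros; try apply H; lia). ring. Qed.

Lemma csum_add_range a b g : csum (a + b) g = Cplus (csum a g) (csum b (fun n => g (a + n)%nat)).
Proof. induction b; simpl. - rewrite Nat.add_0_r. ring. - rewrite Nat.add_succ_r. simpl. rewrite IHb. ring. Qed.

Lemma csum_S n g : csum (S n) g = Cplus (csum n g) (g n).
Proof. reflexivity. Qed.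

Lemma csum_even_odd k g : csum (2 * k) g = Cplus (csum k (fun n => g (2 * n)%nat)) (csum k (fun n => g (2 * n + 1)%nat)).
Proof.
  induction k. - simpl. ring.
  - replace (2 * S k)%nat with (S (S (2 * k))) by lia. rewrite !csum_S, IHk.
    replace (S (2*k)) with (2*k+1)%nat by lia. ring.
Qed.

Lemma csum_swap a b g : csum a (fun n => csum b (fun r => g n r)) = csum b (fun r => csum a (fun n => g n r)).
Proof.
  induction a; simpl.
  - symmetry. apply csum_zero. auto.
  - rewrite IHa. rewrite <- csum_plus. auto.
Qed.

Lemma csum_ext_all n g g' : (forall k, g k = g' k) -> csum n g = csum n g'.
Proof. intros H. apply csum_ext. intros; auto. Qed.

Lemma csum_eo_helper k g a : (forall n, g (2*n)%nat = a n) -> (forall n, g (2*n+1)%nat = RtoC 0) -> csum (2*k) g = csum k a.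
Proof. intros H1 H2. rewrite csum_even_odd. rewrite (csum_ext_all k _ a) by auto.
  rewrite (csum_zero k (fun n => g (2*n+1)%nat)) by auto. apply Cplus_0_r. Qed.

Lemma csum_double_helper k g c : (forall r, g (k + r)%nat = Cmult c (g r)) -> csum (2*k) g = Cmult (Cplus (RtoC 1) c) (csum k g).
Proof. intros H. replace (2*k)%nat with (k+k)%nat by lia. rewrite csum_add_range.
  rewrite (csum_ext_all k (fun r => g (k + r)%nat) (fun r => Cmult c (g r))) by auto. rewrite csum_scal. ring. Qed.


Lemma PIhbar N : (0 < N)%nat -> 2 * PI * hbar N = / INR N.
Proof. intros HN. unfold hbar. assert (INR N <> 0) by (apply not_0_INR; lia).
  pose proof PI_neq0. field. auto. Qed.

Lemma lat_S N j : lat N (S j) = lat N j / 2.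
Proof. unfold lat. simpl. field. apply pow_nonzero. lra. Qed.

Lemma lat_eq N j : (0 < N)%nat -> lat N j = / (INR N * 2 ^ j).
Proof. intros HN. unfold lat. rewrite PIhbar by auto. assert (INR N <> 0) by (apply not_0_INR; lia).
  assert (2^j <> 0) by (apply pow_nonzero; lra). field. auto. Qed.

Lemma lat_pos N j : (0 < N)%nat -> 0 < lat N j.
Proof. intros HN. rewrite lat_eq by auto. apply Rinv_0_lt_compat. apply Rmult_lt_0_compat.
  apply lt_0_INR; lia. apply pow_lt; lra. Qed.

Lemma Ceq_RR (a b : C) : fst a = fst b -> snd a = snd b -> a = b.
Proof. intros; apply injective_projections; auto. Qed.

Lemma cexp_PI_odd (q : Z) : cexp (PI * IZR (2 * q + 1)) = RtoC (-1).
Proof.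
  rewrite plus_IZR, mult_IZR. replace (PI * (2 * IZR q + 1)) with (2 * PI * IZR q + PI) by ring.
  rewrite cexp_add, cexp_2PI_Z, cexp_PI. apply Ceq_RR; simpl; ring.
Qed.

Lemma mf_refine_j N chi j i f x :
  (0 < N)%nat -> (1 <= j)%nat ->
  (forall p (k:Z), chi (p + 2 * IZR k) <-> chi p) ->
  (forall y, f y <> RtoC 0 -> exists k : Z, y = IZR k * lat N j) ->
  mom_formula N chi (S j) i f x = mom_formula N chi j i f x.
Proof.
  intros HN Hj Hchi Hf. unfold mom_formula; cbv zeta.
  replace (N * 2 ^ (i + S j))%nat with (2 * (N * 2 ^ (i + j)))%nat
    by (rewrite Nat.add_succ_r, Nat.pow_succ_r'; lia).
  set (M := (N * 2 ^ (i + j))%nat).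
  assert (HM : 0 < INR M).
  { apply lt_0_INR. unfold M. pose proof (Nat.pow_nonzero 2 (i+j)). lia. }
  rewrite lat_S. pose proof (lat_pos N j HN) as Hh. set (h := lat N j) in *.
  set (y := x / h).
  replace (x / (h/2)) with (2*y) by (unfold y; field; lra).
  set (I := fun n => csum M (fun r => Cmult (f (INR r * h)) (cexp (2 * PI * INR n * (y - INR r) / INR M)))).
  assert (HI: forall n, csum (2*M) (fun r => Cmult (f (INR r * (h/2))) (cexp (2*PI*INR n * (2*y - INR r) / INR (2*M)))) = I n).
  { intros n. rewrite csum_even_odd.
    rewrite (csum_zero M (fun r => Cmult (f (INR (2 * r + 1) * (h / 2))) _)).
    - rewrite Cplus_0_r. apply csum_ext. intros r _. rewrite !mult_INR. simpl (INR 2).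
      f_equal; f_equal; field; lra.
    - intros r _. destruct (classic (f (INR (2 * r + 1) * (h / 2)) = RtoC 0)) as [E|E].
      + rewrite E. apply Ceq_RR; simpl; ring.
      + exfalso. destruct (Hf _ E) as [k Hk].
        assert (INR (2*r+1) = 2 * IZR k) by (apply (Rmult_eq_reg_r (h/2)); [rewrite Hk; field|]; lra).
        rewrite INR_IZR_INZ, <- mult_IZR in H. apply eq_IZR in H. lia. }
  set (chin := fun n => Defs.ind (chi (2 * PI * hbar N * INR n / 2 ^ i))).
  rewrite (csum_ext_all (2*M) _ (fun n => Cmult (chin n) (I n))) by (intros n; rewrite HI; reflexivity).
  replace (2 * M)%nat with (M + M)%nat by lia.
  rewrite csum_add_range. cbv beta.
  assert (Hsh : forall n, Cmult (chin (M + n)%nat) (I (M + n)%nat) = Cmult (cexp (2*PI*y)) (Cmult (chin n) (I n))).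
  { intros n. assert (chin (M+n)%nat = chin n) as ->.
    { unfold chin. apply ind_iff. destruct j as [|j']; [lia|].
      replace (2 * PI * hbar N * INR (M + n) / 2 ^ i) with (2 * PI * hbar N * INR n / 2 ^ i + 2 * IZR (Z.of_nat (2 ^ j'))).
      apply Hchi. rewrite <- INR_IZR_INZ, pow_INR.
      unfold M. rewrite plus_INR, mult_INR, pow_INR, PIhbar by auto. replace (INR 2) with 2 by (simpl; ring).
      replace (2^(i + S j')) with (2^i * (2 * 2^j')) by (rewrite pow_add; simpl; ring).
      assert (INR N <> 0) by (apply not_0_INR; lia). assert (2^i <> 0) by (apply pow_nonzero; lra).
      field. auto. }
    unfold I.
    assert (forall r, cexp (2 * PI * INR (M + n) * (y - INR r) / INR M) =
       Cmult (cexp (2*PI*y)) (cexp (2 * PI * INR n * (y - INR r) / INR M))) as Hc.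
    { intros r. replace (2 * PI * INR (M + n) * (y - INR r) / INR M) with
        ((2*PI*y + 2*PI*IZR (- Z.of_nat r)) + 2 * PI * INR n * (y - INR r) / INR M).
      rewrite !cexp_add, cexp_2PI_Z. apply Ceq_RR; simpl; ring.
      rewrite opp_IZR, <- INR_IZR_INZ, plus_INR. field. lra. }
    repeat rewrite <- csum_scal. apply csum_ext. intros r _. rewrite Hc. ring. }
  rewrite (csum_ext_all M (fun n => Cmult (chin (M+n)%nat) (I (M+n)%nat)) _) by (intros n; apply Hsh).
  rewrite csum_scal.
  set (S := csum M (fun n => Cmult (chin n) (I n))).
  change (csum M _) with S. rewrite plus_INR.
  destruct (classic (exists k : Z, x = IZR k * h)) as [[k Hk]|Hn].
  - rewrite (ind_true (exists k, x = IZR k * h)) by eauto.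
    rewrite ind_true by (exists (2*k)%Z; rewrite Hk, mult_IZR; field).
    replace y with (IZR k) by (unfold y; rewrite Hk; field; lra).
    rewrite cexp_2PI_Z. apply Ceq_RR; simpl; field; lra.
  - rewrite (ind_false (exists k, x = IZR k * h)) by auto.
    destruct (classic (exists k : Z, x = IZR k * (h/2))) as [[k Hk]|Hn2].
    + destruct (Z.Even_or_Odd k) as [[q Hq]|[q Hq]].
      * exfalso. apply Hn. exists q. rewrite Hk, Hq, mult_IZR. field.
      * replace (2*PI*y) with (PI * IZR k) by (unfold y; rewrite Hk; field; lra).
        rewrite Hq, cexp_PI_odd. apply Ceq_RR; simpl; ring.
    + rewrite ind_false by auto. apply Ceq_RR; simpl; ring.
Qed.


Lemma mf_refine_i N chi j i f x :
  (0 < N)%nat -> (forall y, f (y + 2 ^ i) = f y) ->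
  mom_formula N chi j (S i) f x = mom_formula N chi j i f x.
Proof.
  intros HN Hf. unfold mom_formula; cbv zeta.
  replace (N * 2 ^ (S i + j))%nat with (2 * (N * 2 ^ (i + j)))%nat
    by (simpl Nat.add; rewrite Nat.pow_succ_r'; lia).
  set (M := (N * 2 ^ (i + j))%nat).
  assert (HM : 0 < INR M).
  { apply lt_0_INR. unfold M. pose proof (Nat.pow_nonzero 2 (i+j)). lia. }
  pose proof (lat_pos N j HN) as Hh. set (h := lat N j) in *.
  assert (HMh : INR M * h = 2 ^ i).
  { unfold h, M. rewrite lat_eq, mult_INR, pow_INR, pow_add by auto. replace (INR 2) with 2 by (simpl; ring).
    assert (INR N <> 0) by (apply not_0_INR; lia). assert (2^j <> 0) by (apply pow_nonzero; lra). field. auto. }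
  set (y := x / h).
  set (I := fun n => csum M (fun r => Cmult (f (INR r * h)) (cexp (2 * PI * INR n * (y - INR r) / INR M)))).
  set (chin := fun n => Defs.ind (chi (2 * PI * hbar N * INR n / 2 ^ i))).
  rewrite (csum_eo_helper M _ (fun n => Cmult (RtoC 2) (Cmult (chin n) (I n)))).
  2: { intros n.
       rewrite (csum_double_helper M _ (cexp (- PI * INR (2 * n)))).
       - replace (- PI * INR (2*n)) with (2 * PI * IZR (- Z.of_nat n)).
         2: { rewrite opp_IZR, <- INR_IZR_INZ, mult_INR. simpl (INR 2). ring. }
         rewrite cexp_2PI_Z. unfold chin, I.
         replace (2 * PI * hbar N * INR (2 * n) / 2 ^ S i) with (2 * PI * hbar N * INR n / 2 ^ i).
         2: { rewrite mult_INR. simpl (INR 2). simpl pow. field. apply pow_nonzero; lra. }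
         rewrite (csum_ext_all M _ (fun r => Cmult (f (INR r * h)) (cexp (2 * PI * INR n * (y - INR r) / INR M)))).
         + apply Ceq_RR; simpl; ring.
         + intros r. f_equal. f_equal. rewrite !mult_INR. simpl (INR 2). field. lra.
       - intros r. rewrite plus_INR. replace ((INR M + INR r) * h) with (INR r * h + 2^i) by (rewrite <- HMh; ring). rewrite Hf.
         replace (2 * PI * INR (2 * n) * (y - (INR M + INR r)) / INR (2 * M)) with
           (- PI * INR (2 * n) + 2 * PI * INR (2 * n) * (y - INR r) / INR (2 * M)).
         + rewrite cexp_add. ring.
         + rewrite !mult_INR. simpl (INR 2). field. lra. }
  2: { intros n.
       rewrite (csum_double_helper M _ (cexp (- PI * INR (2 * n + 1)))).
       - replace (- PI * INR (2*n+1)) with (PI * IZR (2 * (- Z.of_nat n - 1) + 1)).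
         2: { rewrite plus_IZR, mult_IZR, minus_IZR, opp_IZR, <- INR_IZR_INZ, plus_INR, mult_INR. simpl (INR 2). simpl (INR 1). ring. }
         rewrite cexp_PI_odd. apply Ceq_RR; simpl; ring.
       - intros r. rewrite plus_INR. replace ((INR M + INR r) * h) with (INR r * h + 2^i) by (rewrite <- HMh; ring). rewrite Hf.
         replace (2 * PI * INR (2 * n + 1) * (y - (INR M + INR r)) / INR (2 * M)) with
           (- PI * INR (2 * n + 1) + 2 * PI * INR (2 * n + 1) * (y - INR r) / INR (2 * M)).
         + rewrite cexp_add. ring.
         + rewrite !mult_INR. simpl (INR 2). field. lra. }
  rewrite csum_scal. change (csum M _) with (csum M (fun n => Cmult (chin n) (I n))).
  rewrite mult_INR. simpl (INR 2). apply Ceq_RR; simpl; field; lra.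
Qed.


Lemma struct10_up N f j i : (0 < N)%nat -> comb_struct N 1 0 f ->
  (forall y, f y <> RtoC 0 -> exists k : Z, y = IZR k * lat N (S j)) /\ (forall y, f (y + 2 ^ i) = f y).
Proof.
  intros HN [_ [Hs Hp]]. split.
  - intros y Hy. destruct (Hs y Hy) as [k Hk]. exists (k * Z.of_nat (2 ^ j))%Z.
    rewrite Hk, mult_IZR, <- INR_IZR_INZ, pow_INR, !lat_eq by auto. replace (INR 2) with 2 by (simpl; ring).
    assert (INR N <> 0) by (apply not_0_INR; lia). assert (2^j <> 0) by (apply pow_nonzero; lra).
    simpl pow. field. auto.
  - induction i; intros y.
    + apply Hp.
    + replace (y + 2 ^ S i) with ((y + 2^i) + 2^i) by (simpl; ring). rewrite !IHi. auto.
Qed.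

Lemma mf_indep N chi f d i x : (0 < N)%nat ->
  (forall p (k:Z), chi (p + 2 * IZR k) <-> chi p) -> comb_struct N 1 0 f ->
  mom_formula N chi (S d) i f x = mom_formula N chi 1 0 f x.
Proof.
  intros HN Hchi Hf. induction d.
  - induction i. + reflexivity.
    + rewrite mf_refine_i; auto. apply (struct10_up N f 0 i HN Hf).
  - rewrite mf_refine_j; auto. lia. apply (struct10_up N f d i HN Hf).
Qed.

Lemma mom_mult_10 N chi f : (0 < N)%nat ->
  (forall p (k:Z), chi (p + 2 * IZR k) <-> chi p) -> comb_struct N 1 0 f ->
  mom_mult N chi f = mom_formula N chi 1 0 f.
Proof.
  intros HN Hchi Hf. unfold mom_mult.
  destruct (excluded_middle_informative _) as [H|H].
  - destruct (constructive_indefinite_description _ H) as [[j i] Hji]. simpl.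
    destruct Hji as [Hj _]. destruct j as [|d]; [simpl in Hj; lia|].
    apply functional_extensionality. intros x. apply mf_indep; auto.
  - exfalso. apply H. exists (1%nat, 0%nat). exact Hf.
Qed.


Definition chiE : R -> Prop := fun p => frac_part (p / 2) < / 2.
Definition chiO : R -> Prop := fun p => / 2 <= frac_part (p / 2).

Lemma chiE_per p (k : Z) : chiE (p + 2 * IZR k) <-> chiE p.
Proof. unfold chiE. replace ((p + 2 * IZR k) / 2) with (p/2 + IZR k) by field. rewrite frac_addZ. tauto. Qed.
Lemma chiO_per p (k : Z) : chiO (p + 2 * IZR k) <-> chiO p.
Proof. unfold chiO. replace ((p + 2 * IZR k) / 2) with (p/2 + IZR k) by field. rewrite frac_addZ. tauto. Qed.

Definition KE (N : nat) (y : R) : C :=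
  Cmult (RtoC (/ INR (N + N))) (csum N (fun n => cexp (2 * PI * INR n * y / INR (N + N)))).

Lemma csum_ind_simpl n (P : nat -> Prop) g : (forall k, (k < n)%nat -> P k) ->
  csum n (fun k => Cmult (Defs.ind (P k)) (g k)) = csum n g.
Proof. intros H. apply csum_ext. intros k Hk. rewrite ind_true by auto. ring. Qed.

Lemma csum_ind_zero n (P : nat -> Prop) g : (forall k, (k < n)%nat -> ~ P k) ->
  csum n (fun k => Cmult (Defs.ind (P k)) (g k)) = RtoC 0.
Proof. intros H. apply csum_zero. intros k Hk. rewrite ind_false by auto. ring. Qed.

Lemma pfrac N n : (0 < N)%nat -> (n < N + N)%nat ->
  frac_part (2 * PI * hbar N * INR n / 2 ^ 0 / 2) = INR n / (2 * INR N).
Proof.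
  intros HN Hn. assert (0 < INR N) by (apply lt_0_INR; lia).
  replace (2 * PI * hbar N * INR n / 2 ^ 0 / 2) with (INR n / (2 * INR N)).
  2: { rewrite PIhbar by auto. simpl. field. lra. }
  rewrite (frac_char _ 0).
  - simpl. ring.
  - simpl. split. + apply Rmult_le_pos. apply pos_INR. left. apply Rinv_0_lt_compat. lra.
    + apply lt_INR in Hn. rewrite plus_INR in Hn. apply (Rmult_lt_reg_r (2 * INR N)). lra.
      unfold Rdiv. rewrite Rmult_assoc, Rinv_l by lra. lra.
Qed.

Lemma mf10_E N f x : (0 < N)%nat ->
  mom_formula N chiE 1 0 f x =
  Cmult (Defs.ind (exists k : Z, x = IZR k * lat N 1))
    (csum (N + N) (fun r => Cmult (f (INR r * lat N 1)) (KE N (x / lat N 1 - INR r)))).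
Proof.
  intros HN. assert (0 < INR N) by (apply lt_0_INR; lia).
  unfold mom_formula; cbv zeta.
  replace (N * 2 ^ (0 + 1))%nat with (N + N)%nat by (simpl; lia).
  rewrite csum_add_range.
  rewrite (csum_ind_simpl N (fun n => chiE (2 * PI * hbar N * INR n / 2 ^ 0))).
  2: { intros k Hk. unfold chiE. rewrite pfrac by lia. apply lt_INR in Hk.
       apply (Rmult_lt_reg_r (2 * INR N)). lra. unfold Rdiv. rewrite Rmult_assoc, Rinv_l by lra. lra. }
  rewrite (csum_ind_zero N (fun n => chiE (2 * PI * hbar N * INR (N + n) / 2 ^ 0))).
  2: { intros k Hk. unfold chiE. rewrite pfrac by lia. rewrite plus_INR.
       assert (0 <= INR k) by apply pos_INR. intro C.
       apply (Rmult_lt_compat_r (2 * INR N)) in C; [|lra]. unfold Rdiv in C. rewrite Rmult_assoc, Rinv_l in C by lra. lra. }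
  rewrite Cplus_0_r. f_equal. rewrite csum_swap, <- csum_scal. apply csum_ext_all. intros r.
  rewrite csum_scal. unfold KE. ring.
Qed.

Lemma mf10_O N f x : (0 < N)%nat ->
  mom_formula N chiO 1 0 f x =
  Cmult (Defs.ind (exists k : Z, x = IZR k * lat N 1))
    (csum (N + N) (fun r => Cmult (f (INR r * lat N 1))
       (Cmult (cexp (PI * (x / lat N 1 - INR r))) (KE N (x / lat N 1 - INR r))))).
Proof.
  intros HN. assert (0 < INR N) by (apply lt_0_INR; lia).
  unfold mom_formula; cbv zeta.
  replace (N * 2 ^ (0 + 1))%nat with (N + N)%nat by (simpl; lia).
  rewrite csum_add_range.
  rewrite (csum_ind_zero N (fun n => chiO (2 * PI * hbar N * INR n / 2 ^ 0))).
  2: { intros k Hk. unfold chiO. rewrite pfrac by lia. apply lt_INR in Hk. intro C.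
       apply (Rmult_le_compat_r (2 * INR N)) in C; [|lra]. unfold Rdiv in C. rewrite Rmult_assoc, Rinv_l in C by lra. lra. }
  rewrite (csum_ind_simpl N (fun n => chiO (2 * PI * hbar N * INR (N + n) / 2 ^ 0))).
  2: { intros k Hk. unfold chiO. rewrite pfrac by lia. rewrite plus_INR.
       assert (0 <= INR k) by apply pos_INR.
       apply (Rmult_le_reg_r (2 * INR N)). lra. unfold Rdiv. rewrite Rmult_assoc, Rinv_l by lra. lra. }
  rewrite Cplus_0_l. f_equal. rewrite csum_swap, <- csum_scal. apply csum_ext_all. intros r.
  set (y := x / lat N 1).
  rewrite (csum_ext_all N _ (fun n => Cmult (f (INR r * lat N 1))
     (Cmult (cexp (PI * (y - INR r))) (cexp (2 * PI * INR n * (y - INR r) / INR (N + N)))))).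
  - rewrite csum_scal, csum_scal. unfold KE. ring.
  - intros n. f_equal. rewrite <- cexp_add. f_equal. rewrite !plus_INR. field. lra.
Qed.



Lemma INRN_pos (N : nat) (HN : (0 < N)%nat) : 0 < INR N.
Proof. apply lt_0_INR; lia. Qed.

Lemma h_eq (N : nat) (HN : (0 < N)%nat) : lat N 1 = / (2 * INR N).
Proof. rewrite lat_eq by auto. simpl. pose proof (INRN_pos N HN). field. lra. Qed.

Lemma h_pos (N : nat) (HN : (0 < N)%nat) : 0 < lat N 1.
Proof. apply lat_pos; auto. Qed.

Lemma Nh (N : nat) (HN : (0 < N)%nat) : INR N * lat N 1 = / 2.
Proof. rewrite (h_eq N HN). pose proof (INRN_pos N HN). field. lra. Qed.

Lemma NNh (N : nat) (HN : (0 < N)%nat) : INR (N + N) * lat N 1 = 1.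
Proof. rewrite plus_INR, (h_eq N HN). pose proof (INRN_pos N HN). field. lra. Qed.

Lemma xhbar (N : nat) (HN : (0 < N)%nat) x : 1 * x / hbar N = PI * (x / lat N 1).
Proof. rewrite (h_eq N HN). unfold hbar. pose proof (INRN_pos N HN). pose proof PI_neq0. field. split; lra. Qed.

Lemma xhbarm (N : nat) (HN : (0 < N)%nat) x : -1 * x / hbar N = - (PI * (x / lat N 1)).
Proof. rewrite (h_eq N HN). unfold hbar. pose proof (INRN_pos N HN). pose proof PI_neq0. field. split; lra. Qed.

Definition P1 (N : nat) (f : state) : Prop :=
  (forall x, f x <> RtoC 0 -> exists k : Z, x = IZR k * (2 * lat N 1)) /\ (forall x, f (x + 1) = f x).

Lemma P1_struct (N : nat) (HN : (0 < N)%nat) f : P1 N f -> comb_struct N 1 0 f.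
Proof.
  intros [Hs Hp]. split; [lia|split].
  - intros x Hx. destruct (Hs x Hx) as [k Hk]. exists (2*k)%Z. rewrite Hk, mult_IZR. ring.
  - intros x. simpl. apply Hp.
Qed.

Lemma P1_X (N : nat) (HN : (0 < N)%nat) f : P1 N f -> Xpow N 1 f = f.
Proof.
  intros [Hs _]. apply functional_extensionality. intros x. unfold Xpow.
  destruct (classic (f x = RtoC 0)) as [E|E].
  - rewrite E. apply Ceq_RR; simpl; ring.
  - destruct (Hs x E) as [k Hk]. rewrite (xhbar N HN).
    replace (PI * (x / lat N 1)) with (2 * PI * IZR k) by (rewrite Hk; pose proof (h_pos N HN); field; lra).
    rewrite cexp_2PI_Z. apply Ceq_RR; simpl; ring.
Qed.

Lemma P1_Y (N : nat) f : P1 N f -> Ypow 1 f = f.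
Proof. intros [_ Hp]. apply functional_extensionality. intros x. apply Hp. Qed.

Lemma Phi_P1 (N : nat) (HN : (0 < N)%nat) m : P1 N (Phi N m).
Proof.
  split.
  - intros x Hx. unfold Phi in Hx. destruct (classic (exists k : Z, x = INR m / INR N + IZR k)) as [[k Hk]|Hn].
    + exists (Z.of_nat m + k * Z.of_nat N)%Z. rewrite Hk. rewrite (h_eq N HN), plus_IZR, mult_IZR, <- !INR_IZR_INZ.
      pose proof (INRN_pos N HN). field. lra.
    + exfalso. apply Hx. rewrite ind_false by auto. apply Ceq_RR; simpl; ring.
  - intros x. unfold Phi. f_equal. apply ind_iff. split.
    + intros [k Hk]. exists (k - 1)%Z. rewrite minus_IZR. simpl (IZR 1). lra.
    + intros [k Hk]. exists (k + 1)%Z. rewrite plus_IZR. simpl (IZR 1). lra.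
Qed.

Lemma P1_add (N : nat) f g : P1 N f -> P1 N g -> P1 N (fun x => Cplus (f x) (g x)).
Proof.
  intros [Hs1 Hp1] [Hs2 Hp2]. split.
  - intros x Hx. destruct (classic (f x = RtoC 0)) as [E|E]; auto.
    apply Hs2. intro E2. apply Hx. rewrite E, E2. apply Ceq_RR; simpl; ring.
  - intros x. rewrite Hp1, Hp2. auto.
Qed.

Lemma P1_zero (N : nat) : P1 N (fun _ => RtoC 0).
Proof. split; auto. intros x H. exfalso; auto. Qed.

Lemma P1_UjVk (N : nat) c j k v : P1 N v -> P1 N (fun x => Cmult c (UjVk N j k v x)).
Proof.
  intros [Hs Hp]. unfold UjVk. split.
  - intros x Hx. destruct (classic (v (x + 2 * PI * hbar N * IZR k) = RtoC 0)) as [E|E].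
    + exfalso. apply Hx. rewrite E. apply Ceq_RR; simpl; ring.
    + destruct (Hs _ E) as [q Hq]. exists (q - k)%Z. rewrite minus_IZR.
      replace (2 * lat N 1) with (2 * PI * hbar N) in *.
      * lra.
      * unfold lat. simpl. field.
  - intros x. replace (x + 1 + 2 * PI * hbar N * IZR k) with ((x + 2 * PI * hbar N * IZR k) + 1) by ring.
    rewrite Hp. replace (2 * PI * IZR j * (x + 1)) with (2 * PI * IZR j * x + 2 * PI * IZR j) by ring.
    rewrite cexp_add, cexp_2PI_Z. f_equal. ring.
Qed.

Lemma P1_A (N : nat) l v : P1 N v -> P1 N (Aop N l v).
Proof.
  intros Hv. unfold Aop. induction l as [|[[c j] k] l IH].
  - apply P1_zero.
  - simpl. apply (P1_add N _ _ IH). apply (P1_UjVk N c j k v Hv).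
Qed.



Lemma KE_per N z : (0 < N)%nat -> KE N (z + INR (N + N)) = KE N z.
Proof.
  intros HN. unfold KE. f_equal. apply csum_ext_all. intros n.
  replace (2 * PI * INR n * (z + INR (N + N)) / INR (N + N)) with
     (2 * PI * INR n * z / INR (N + N) + 2 * PI * IZR (Z.of_nat n)).
  - rewrite cexp_add, cexp_2PI_Z. ring.
  - rewrite <- INR_IZR_INZ. field. rewrite plus_INR. pose proof (INRN_pos N HN). lra.
Qed.

Lemma cexp_PI_even N : Nat.Even N -> cexp (PI * INR N) = RtoC 1.
Proof. intros [q Hq]. subst. rewrite mult_INR, (INR_IZR_INZ q). replace (INR 2) with 2 by (simpl; ring).
  replace (PI * (2 * IZR (Z.of_nat q))) with (2 * PI * IZR (Z.of_nat q)) by ring. apply cexp_2PI_Z. Qed.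

Lemma sq_helper (c L R s : C) : Cmult c c = RtoC 1 ->
  Cplus (Cmult R s) (Cmult L (Cmult c s)) = Cmult c (Cplus (Cmult L s) (Cmult R (Cmult c s))).
Proof. intros H. transitivity (Cplus (Cmult (Cmult c c) (Cmult R s)) (Cmult L (Cmult c s))).
  rewrite H; ring. ring. Qed.

Lemma cexp_sq_int (t : Z) : Cmult (cexp (PI * IZR t)) (cexp (PI * IZR t)) = RtoC 1.
Proof. rewrite <- cexp_add. replace (PI * IZR t + PI * IZR t) with (2 * PI * IZR t) by ring. apply cexp_2PI_Z. Qed.

Lemma onlat_shift N x (a : Z) : (0 < N)%nat ->
  ((exists k : Z, x + IZR a * INR N * lat N 1 = IZR k * lat N 1) <-> (exists k : Z, x = IZR k * lat N 1)).
Proof.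
  intros HN. split.
  - intros [k Hk]. exists (k - a * Z.of_nat N)%Z. rewrite minus_IZR, mult_IZR, <- INR_IZR_INZ. lra.
  - intros [k Hk]. exists (k + a * Z.of_nat N)%Z. rewrite plus_IZR, mult_IZR, <- INR_IZR_INZ. lra.
Qed.

Lemma Fdag_P1 N v : (0 < N)%nat -> Nat.Even N -> P1 N v -> P1 N (Fdag N v).
Proof.
  intros HN Hev Hv. pose proof (h_pos N HN) as Hh. pose proof (INRN_pos N HN) as HNp.
  pose proof (Nh N HN) as HNh. pose proof (NNh N HN) as HNNh.
  set (h := lat N 1) in *.
  destruct Hv as [Hvs Hvp].
  set (w := op_add Lop (op_comp Rop (Xpow N 1)) (Sinv v)).
  set (w' := Ypow (/2) w).
  assert (HF: forall x, Fdag N v x = Cplus (Epop N w x) (Opop N w' x)) by reflexivity.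
  assert (Hw : forall x, w x = Cplus (Cmult (Defs.ind (frac_part x < /2)) (Cmult (RtoC (/ sqrt 2)) (v (2 * x))))
     (Cmult (Defs.ind (/2 <= frac_part x)) (Cmult (cexp (1 * x / hbar N)) (Cmult (RtoC (/ sqrt 2)) (v (2 * x)))))) by reflexivity.
  assert (Hw0 : forall x, v (2 * x) = RtoC 0 -> w x = RtoC 0).
  { intros x E. rewrite Hw, E. apply Ceq_RR; simpl; ring. }
  assert (Hw1 : comb_struct N 1 0 w).
  { split; [lia|split].
    - intros x Hx. destruct (classic (v (2 * x) = RtoC 0)) as [E|E]. { exfalso; auto. }
      destruct (Hvs _ E) as [k Hk]. exists k. fold h in Hk |- *. apply (Rmult_eq_reg_l 2); [rewrite Hk; ring | lra].
    - intros x. simpl. rewrite !Hw. rewrite <- (frac_addZ x 1). simpl (IZR 1).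
      replace (2 * (x + 1)) with (2 * x + 1 + 1) by ring. rewrite !Hvp.
      rewrite !xhbar by auto. fold h.
      replace (PI * ((x + 1) / h)) with (PI * (x / h) + 2 * PI * IZR (Z.of_nat N)).
      + rewrite cexp_add, cexp_2PI_Z, Cmult_1_r. reflexivity.
      + rewrite <- INR_IZR_INZ. rewrite <- HNNh, plus_INR. field. lra. }
  assert (Hw2 : forall x, w (x + /2) = Cmult (cexp (PI * (x / h))) (w x)).
  { intros x. destruct (classic (v (2 * x) = RtoC 0)) as [E|E].
    - rewrite (Hw0 x E). rewrite (Hw0 (x + /2)). apply Ceq_RR; simpl; ring.
      replace (2 * (x + /2)) with (2 * x + 1) by field. rewrite Hvp. auto.
    - destruct (Hvs _ E) as [k Hk]. fold h in Hk.
      rewrite !Hw. rewrite frac_half_L, frac_half_R.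
      replace (2 * (x + /2)) with (2 * x + 1) by field. rewrite Hvp.
      rewrite !xhbar by auto. fold h.
      replace (PI * ((x + /2) / h)) with (PI * (x / h) + PI * INR N) by (rewrite <- HNh; field; lra).
      rewrite cexp_add, cexp_PI_even, Cmult_1_r by auto.
      assert (Hk2 : x = IZR k * h) by (apply (Rmult_eq_reg_l 2); [rewrite Hk; ring|lra]).
      apply sq_helper. replace (x / h) with (IZR k) by (rewrite Hk2; field; lra). apply cexp_sq_int. }
  assert (Hw3 : comb_struct N 1 0 w').
  { split; [lia|split].
    - intros x Hx. unfold w', Ypow in Hx. destruct (proj1 (proj2 Hw1) _ Hx) as [k Hk].
      exists (k - Z.of_nat N)%Z. rewrite minus_IZR, <- INR_IZR_INZ. fold h in Hk |- *.
      replace (/2) with (INR N * h) in Hk by auto. lra.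
    - intros x. unfold w', Ypow. replace (x + 2 ^ 0 + / 2) with (x + / 2 + 2 ^ 0) by ring.
      apply (proj2 (proj2 Hw1)). }
  assert (Hout : forall x, Fdag N v x = Cmult (Defs.ind (exists k : Z, x = IZR k * h))
     (Cmult (Cplus (RtoC 1) (cexp (PI * (x / h)))) (csum (N + N) (fun r => Cmult (w (INR r * h)) (KE N (x / h - INR r)))))).
  { intros x. rewrite HF. change (Epop N w x) with (mom_mult N chiE w x). change (Opop N w' x) with (mom_mult N chiO w' x).
    rewrite (mom_mult_10 N chiE w HN chiE_per Hw1).
    rewrite (mom_mult_10 N chiO w' HN chiO_per Hw3).
    rewrite mf10_E, mf10_O by auto. fold h.
    rewrite (csum_ext_all (N + N) (fun r => Cmult (w' (INR r * h)) (Cmult (cexp (PI * (x / h - INR r))) (KE N (x / h - INR r))))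
       (fun r => Cmult (cexp (PI * (x / h))) (Cmult (w (INR r * h)) (KE N (x / h - INR r))))).
    - rewrite csum_scal. ring.
    - intros r. unfold w', Ypow. rewrite Hw2.
      replace (PI * (x / h)) with (PI * (INR r * h / h) + PI * (x / h - INR r)) by (field; lra).
      rewrite cexp_add. ring. }
  split.
  - intros x Hx. rewrite Hout in Hx.
    destruct (classic (exists k : Z, x = IZR k * h)) as [[t Ht]|Hn].
    2: { exfalso. apply Hx. rewrite ind_false by auto. ring. }
    destruct (Z.Even_or_Odd t) as [[q Hq]|[q Hq]].
    + exists q. rewrite Ht, Hq, mult_IZR. fold h. ring.
    + exfalso. apply Hx. replace (x / h) with (IZR t) by (rewrite Ht; field; lra).
      rewrite Hq, cexp_PI_odd. apply Ceq_RR; simpl; ring.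
  - intros x. rewrite !Hout. f_equal.
    + apply ind_iff. pose proof (onlat_shift N x 2 HN) as Hs. fold h in Hs.
      replace (IZR 2 * INR N * h) with 1 in Hs by (simpl (IZR 2); lra). exact Hs.
    + replace ((x + 1) / h) with (x / h + INR (N + N)) by (rewrite <- HNNh; field; lra).
      f_equal.
      * f_equal. rewrite Rmult_plus_distr_l, cexp_add. rewrite plus_INR.
        replace (PI * (INR N + INR N)) with (2 * PI * IZR (Z.of_nat N)) by (rewrite <- INR_IZR_INZ; ring).
        rewrite cexp_2PI_Z. ring.
      * apply csum_ext_all. intros r. f_equal.
        replace (x / h + INR (N + N) - INR r) with ((x / h - INR r) + INR (N + N)) by ring.
        apply KE_per; auto.
Qed.


Lemma plus_swap_helper (a b c d : C) : a = d -> b = c -> Cplus a b = Cplus c d.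
Proof. intros -> ->. ring. Qed.

Lemma sq_helper2 (c L R g : C) : Cmult c c = RtoC 1 ->
  Cplus (Cmult R (Cmult c g)) (Cmult c (Cmult L (Cmult c g))) = Cplus (Cmult L g) (Cmult c (Cmult R g)).
Proof. intros H. transitivity (Cplus (Cmult R (Cmult c g)) (Cmult (Cmult c c) (Cmult L g))). ring. rewrite H. ring. Qed.

Lemma F_P1 N m : (0 < N)%nat -> Nat.Even N -> P1 N (Fop N (Phi N m)).
Proof.
  intros HN Hev. pose proof (h_pos N HN) as Hh. pose proof (INRN_pos N HN) as HNp.
  pose proof (Nh N HN) as HNh. pose proof (NNh N HN) as HNNh.
  pose proof (Phi_P1 N HN m) as HP. pose proof (P1_struct N HN _ HP) as HPs.
  destruct HP as [HPs1 _].
  set (h := lat N 1) in *.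
  set (Ph := Phi N m) in *.
  set (g := op_add (Epop N) (op_comp (Ypow (-/2)) (Opop N)) Ph).
  assert (HF : forall y, Fop N Ph y = Cmult (RtoC (sqrt 2)) (Cplus (Cmult (Defs.ind (frac_part (y/2) < /2)) (g (y/2)))
     (Cmult (cexp (-1 * (y/2) / hbar N)) (Cmult (Defs.ind (/2 <= frac_part (y/2))) (g (y/2)))))) by reflexivity.
  destruct Hev as [q Hq].
  assert (Hg : forall x, g x = Cplus
     (Cmult (Defs.ind (exists k : Z, x = IZR k * h)) (csum (N + N) (fun r => Cmult (Ph (INR r * h)) (KE N (x / h - INR r)))))
     (Cmult (Defs.ind (exists k : Z, x + - / 2 = IZR k * h)) (csum (N + N) (fun r => Cmult (Ph (INR r * h))
        (Cmult (cexp (PI * ((x + - / 2) / h - INR r))) (KE N ((x + - / 2) / h - INR r))))))).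
  { intros x. change (g x) with (Cplus (mom_mult N chiE Ph x) (mom_mult N chiO Ph (x + - / 2))).
    rewrite (mom_mult_10 N chiE Ph HN chiE_per HPs).
    rewrite (mom_mult_10 N chiO Ph HN chiO_per HPs).
    rewrite mf10_E, mf10_O by auto. reflexivity. }
  assert (Hsh : forall x (a : Z), (exists k : Z, x + IZR a * / 2 = IZR k * h) <-> (exists k : Z, x = IZR k * h)).
  { intros x a. pose proof (onlat_shift N x a HN) as Hs. fold h in Hs.
    replace (IZR a * INR N * h) with (IZR a * /2) in Hs by (rewrite <- HNh; ring). exact Hs. }
  assert (Hp2 : forall x, (exists k : Z, x + /2 = IZR k * h) <-> (exists k : Z, x = IZR k * h)).
  { intros x. rewrite <- (Hsh x 1%Z). replace (x + IZR 1 * /2) with (x + /2) by (simpl; ring). tauto. }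
  assert (Hm2 : forall x, (exists k : Z, x + - /2 = IZR k * h) <-> (exists k : Z, x = IZR k * h)).
  { intros x. rewrite <- (Hsh x (-1)%Z). replace (x + IZR (-1) * /2) with (x + - /2) by (simpl; ring). tauto. }
  assert (Hg0 : forall x, g x <> RtoC 0 -> exists t : Z, x = IZR t * h).
  { intros x Hx. destruct (classic (exists k : Z, x = IZR k * h)) as [H|H]; auto.
    exfalso. apply Hx. rewrite Hg. rewrite (ind_false (exists k : Z, x = IZR k * h)) by auto.
    rewrite ind_false. apply Ceq_RR; simpl; ring.
    rewrite Hm2. auto. }
  assert (Hr : forall r : nat, Ph (INR r * h) <> RtoC 0 -> exists k : Z, INR r = 2 * IZR k).
  { intros r Hr. destruct (HPs1 _ Hr) as [k Hk]. exists k. fold h in Hk.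
    apply (Rmult_eq_reg_r h); [rewrite Hk; ring | lra]. }
  assert (Hg1 : forall x, g (x + /2) = Cmult (cexp (PI * (x / h))) (g x)).
  { intros x. rewrite !Hg.
    destruct (classic (exists k : Z, x = IZR k * h)) as [[t Ht]|Hn].
    - rewrite !ind_true.
      all: try (rewrite ?Hm2, ?Hp2, ?Hm2; exists t; auto).
      replace (x / h) with (IZR t) by (rewrite Ht; field; lra).
      replace ((x + /2) / h) with (IZR t + INR N) by (rewrite Ht, <- HNh; field; lra).
      replace ((x + /2 + - /2) / h) with (IZR t) by (rewrite Ht; field; lra).
      replace ((x + - /2) / h) with (IZR t - INR N) by (rewrite Ht, <- HNh; field; lra).
      rewrite !Cmult_1_l, Cmult_plus_distr_l, <- !csum_scal.
      apply plus_swap_helper; apply csum_ext_all; intros r;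
        (destruct (classic (Ph (INR r * h) = RtoC 0)) as [E|E];
         [rewrite E; apply Ceq_RR; simpl; ring|]);
        destruct (Hr r E) as [k Hk].
      + replace (IZR t + INR N - INR r) with ((IZR t - INR N - INR r) + INR (N + N)) by (rewrite plus_INR; ring).
        rewrite KE_per by auto.
        transitivity (Cmult (Cmult (cexp (PI * IZR t)) (cexp (PI * (IZR t - INR N - INR r)))) (Cmult (Ph (INR r * h)) (KE N (IZR t - INR N - INR r)))).
        * rewrite <- cexp_add. replace (PI * IZR t + PI * (IZR t - INR N - INR r)) with (2 * PI * IZR (t - Z.of_nat q - k)).
          -- rewrite cexp_2PI_Z. ring.
          -- rewrite Hk, !minus_IZR, <- INR_IZR_INZ, Hq, mult_INR. simpl (INR 2). ring.
        * ring.
      + replace (PI * (IZR t - INR r)) with (PI * IZR t + 2 * PI * IZR (- k)) by (rewrite Hk, opp_IZR; ring).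
        rewrite cexp_add, cexp_2PI_Z. ring.
    - rewrite !ind_false.
      + apply Ceq_RR; simpl; ring.
      all: rewrite ?Hm2, ?Hp2, ?Hm2; auto. }
  split.
  - intros y Hy. rewrite HF in Hy. destruct (classic (g (y / 2) = RtoC 0)) as [E|E].
    + exfalso. apply Hy. rewrite E. apply Ceq_RR; simpl; ring.
    + destruct (Hg0 _ E) as [t Ht]. exists t. fold h. lra.
  - intros y. rewrite !HF. f_equal.
    replace ((y + 1) / 2) with (y / 2 + / 2) by field.
    set (z := y / 2).
    destruct (classic (g z = RtoC 0)) as [E|E].
    + rewrite Hg1, E. apply Ceq_RR; simpl; ring.
    + destruct (Hg0 _ E) as [t Ht].
      rewrite Hg1, frac_half_L, frac_half_R.
      rewrite !xhbarm by auto. fold h.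
      replace (- (PI * ((z + / 2) / h))) with (PI * (z / h) + 2 * PI * IZR (- t - Z.of_nat q)).
      2: { rewrite minus_IZR, opp_IZR, <- INR_IZR_INZ. rewrite Ht.
           replace (/2) with (INR N * h) by auto. rewrite Hq, mult_INR. simpl (INR 2). field. lra. }
      replace (- (PI * (z / h))) with (PI * (z / h) + 2 * PI * IZR (- t)).
      2: { rewrite opp_IZR, Ht. field. lra. }
      rewrite !cexp_add, !cexp_2PI_Z, !Cmult_1_r.
      apply sq_helper2. replace (z / h) with (IZR t) by (rewrite Ht; field; lra). apply cexp_sq_int.
Qed.


Theorem mainTheorem5 (N : nat) (HN : (0 < N)%nat) (Heven : Nat.Even N)
  (l : list (C * Z * Z)) (m : nat) (Hm : (m < N)%nat) :
  let G := op_comp (Fdag N) (op_comp (Aop N l) (Fop N)) in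
  commutator (Xpow N 1) G (Phi N m) = zero_state /\
  commutator (Ypow 1) G (Phi N m) = zero_state.
Proof.
  intros G.
  assert (HG : P1 N (G (Phi N m))).
  { unfold G, op_comp. apply Fdag_P1; auto. apply P1_A. apply F_P1; auto. }
  pose proof (Phi_P1 N HN m) as HP.
  split; apply functional_extensionality; intros x; unfold commutator, zero_state.
  - rewrite (P1_X N HN _ HG), (P1_X N HN _ HP). apply Ceq_RR; simpl; ring.
  - rewrite (P1_Y N _ HG), (P1_Y N _ HP). apply Ceq_RR; simpl; ring.
Qed.
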